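(* Assume the L-smoothness assumption and the $\mu$-convexity assumption with $\mu>0$, let $x^\star$ be the minimizer of $f$, suppose $\sigma_f^2=0$ (interpolation), and let $c\ge4\tau^2$, $\gamma_b>0$. Then with $\alpha:=\min\{\frac1{2cL},\gamma_b\}$, for every $T\ge1$ the FedSPS iterates satisfy $$\mathbb E\|\bar x_T-x^\star\|^2\le \frac{1}{\mu\alpha}(1-\mu\alpha)^T\|\bar x_0-x^\star\|^2.$$
   Context: Setting: integers $n\ge1$, $d\ge1$, $\tau\ge1$. For each $i\in[n]$, $\mathcal D_i$ is a probability distribution on $\Omega_i$, $F_i:\mathbb R^d\times\Omega_i\to\mathbb R$ with $F_i(\cdot,\xi)$ differentiable for $\xi\in\operatorname{supp}(\mathcal D_i)$; $f_i(x):=\mathbb E_{\xi\sim\mathcal D_i}F_i(x,\xi)$, $\mathbb E\nabla F_i(x,\xi)=\nabla f_i(x)$, $f:=\frac1n\sum_i f_i$. $F_i^\star:=\inf_{\xi\in\operatorname{supp}(\mathcal D_i),x}F_i(x,\xi)$ and $\ell_i^\star\le F_i^\star$ are given reals. FedSPS with parameters $c,\gamma_b>0$: $x_0^i=x_0$; at each $t$, client $i$ draws $\xi_t^i\sim\mathcal D_i$ independently of everything else, sets $g_t^i:=\nabla F_i(x_t^i,\xi_t^i)$, $\gamma_t^i:=\min\{\frac{F_i(x_t^i,\xi_t^i)-\ell_i^\star}{c\|g_t^i\|^2},\gamma_b\}$ (first term $+\infty$ if $g_t^i=0$); if $t+1$ is a multiple of $\tau$, $x_{t+1}^i:=\frac1n\sum_j(x_t^j-\gamma_t^jg_t^j)$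 for all $i$, else $x_{t+1}^i:=x_t^i-\gamma_t^ig_t^i$. $\bar x_t:=\frac1n\sum_i x_t^i$. L-smoothness assumption: $\|\nabla F_i(y,\xi)-\nabla F_i(x,\xi)\|\le L\|x-y\|$ for all $i$, $\xi\in\operatorname{supp}(\mathcal D_i)$, $x,y$. $\mu$-convexity assumption: $F_i(y,\xi)\ge F_i(x,\xi)+\langle\nabla F_i(x,\xi),y-x\rangle+\frac\mu2\|y-x\|^2$ for all $i,\xi,x,y$. $\sigma_f^2:=\frac1n\sum_i(f_i(x^\star)-\ell_i^\star)$. *)

(* Defs.v *)
From HB Require Import structures.
From mathcomp Require Import all_boot all_order all_algebra.
From mathcomp Require Import all_classical all_reals all_analysis.
Set Implicit Arguments. Unset Strict Implicit. Unset Printing Implicit Defensive.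
Import Order.TTheory GRing.Theory Num.Theory.
Import numFieldNormedType.Exports.
Local Open Scope classical_set_scope.
Local Open Scope ring_scope.

Section FedSPS.
Variable R : realType.

Definition dotv (d : nat) (u v : 'rV[R]_d) : R := \sum_(j < d) u 0 j * v 0 j.
Definition sqn (d : nat) (v : 'rV[R]_d) : R := dotv v v.

Definition grad (d : nat) (f : 'rV[R]_d -> R) (x : 'rV[R]_d) : 'rV[R]_d :=
  \row_(j < d) ('d f x (delta_mx 0 j : 'rV[R]_d)).

(* Stochastic Polyak step size with upper bound gamma_b;
   the first term is +oo when g = 0, so the min is gamma_b then. *)
Definition sps_step (c gb Fv l : R) (d : nat) (g : 'rV[R]_d) : R :=
  if g == 0 then gb else Num.min ((Fv - l) / (c * sqn g)) gb.

Unset Implicit Arguments.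
Variables (n d tau : nat) (dO : 'I_n -> measure_display)
  (Om : forall i : 'I_n, measurableType (dO i))
  (F : forall i : 'I_n, 'rV[R]_d -> Om i -> R) (lstar : 'I_n -> R)
  (c gb : R) (x0 : 'rV[R]_d).

Definition fed_step (t : nat) (X : 'I_n -> 'rV[R]_d) (s : forall i, Om i)
    : 'I_n -> 'rV[R]_d :=
  let y (i : 'I_n) : 'rV[R]_d :=
    let g := grad (fun z : 'rV[R]_d => F i z (s i)) (X i) in
    X i - sps_step c gb (F i (X i) (s i)) (lstar i) g *: g in
  if (t.+1 %% tau == 0)%N then fun _ => n%:R^-1 *: \sum_(j < n) y j else y.

(* local iterates x_t^i along a sample path (path t i = xi_t^i) *)
Fixpoint fedsps (path : nat -> forall i, Om i) (t : nat) : 'I_n -> 'rV[R]_d :=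
  match t with
  | 0 => fun _ => x0
  | t'.+1 => fed_step t' (fedsps path t') (path t')
  end.

Definition xbar (path : nat -> forall i, Om i) (t : nat) : 'rV[R]_d :=
  n%:R^-1 *: \sum_(i < n) fedsps path t i.

Definition mutually_independent (dT : measure_display) (T : measurableType dT)
    (P : probability T R) (xi : nat -> forall i : 'I_n, T -> Om i) : Prop :=
  forall (A : forall (t : nat) (i : 'I_n), set (Om i)),
    (forall t i, measurable (A t i)) ->
    forall s : seq (nat * 'I_n), uniq s ->
      fine (P (\big[setI/setT]_(k <- s) (xi k.1 k.2 @^-1` A k.1 k.2))) =
      \prod_(k <- s) fine (P (xi k.1 k.2 @^-1` A k.1 k.2)).

Definition floc (D : forall i : 'I_n, probability (Om i) R) (i : 'I_n)
    (x : 'rV[R]_d) : R :=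
  Rintegral (D i) setT (F i x).

Definition fglob (D : forall i : 'I_n, probability (Om i) R) (x : 'rV[R]_d) : R :=
  n%:R^-1 * \sum_(i < n) floc D i x.

Definition sigma_f2 (D : forall i : 'I_n, probability (Om i) R)
    (xstar : 'rV[R]_d) : R :=
  n%:R^-1 * \sum_(i < n) (floc D i xstar - lstar i).

End FedSPS.

Definition enorm {R : realType} {d : nat} (v : 'rV[R]_d) : R := Num.sqrt (sqn v).

(* Main.v *)
Require Import Defs.
From HB Require Import structures.
From mathcomp Require Import all_boot all_order all_algebra.
From mathcomp Require Import all_classical all_reals all_analysis.
From mathcomp Require Import ring lra measurable_realfun.
Import Order.TTheory GRing.Theory Num.Theory.
Import numFieldNormedType.Exports.
Local Open Scope classical_set_scope.
Local Open Scope ring_scope.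
Section LinAlg.
Variables (R : realType) (d : nat).
Implicit Types (u v w : 'rV[R]_d).

Lemma dotvC u v : dotv u v = dotv v u.
Proof. by rewrite /dotv; apply: eq_bigr => j _; rewrite mulrC. Qed.

Lemma dotvDl u v w : dotv (u + v) w = dotv u w + dotv v w.
Proof. by rewrite /dotv -big_split; apply: eq_bigr => j _; rewrite !mxE mulrDl. Qed.

Lemma dotvZl k u w : dotv (k *: u) w = k * dotv u w.
Proof. by rewrite /dotv mulr_sumr; apply: eq_bigr => j _; rewrite !mxE mulrA. Qed.

Lemma dotvNl u w : dotv (- u) w = - dotv u w.
Proof. by rewrite -scaleN1r dotvZl mulN1r. Qed.

Lemma dotvBl u v w : dotv (u - v) w = dotv u w - dotv v w.
Proof. by rewrite dotvDl dotvNl. Qed.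

Lemma dotvDr u v w : dotv w (u + v) = dotv w u + dotv w v.
Proof. by rewrite dotvC dotvDl !(dotvC w). Qed.
Lemma dotvZr k u w : dotv w (k *: u) = k * dotv w u.
Proof. by rewrite dotvC dotvZl dotvC. Qed.
Lemma dotvNr u w : dotv w (- u) = - dotv w u.
Proof. by rewrite dotvC dotvNl dotvC. Qed.
Lemma dotvBr u v w : dotv w (u - v) = dotv w u - dotv w v.
Proof. by rewrite dotvDr dotvNr. Qed.

Lemma sqn_ge0 v : 0 <= sqn v.
Proof. by rewrite /sqn /dotv sumr_ge0 // => j _; rewrite -expr2 sqr_ge0. Qed.

Lemma sqn_eq0 v : sqn v = 0 -> v = 0.
Proof.
move=> h; apply/rowP => j; rewrite mxE.
have := h; rewrite /sqn /dotv (bigD1 j) //=.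
have sq0 (x : R) : 0 <= x * x by rewrite -expr2 sqr_ge0.
move/eqP; rewrite paddr_eq0 ?sq0 //; last by rewrite sumr_ge0 // => k _; exact: sq0.
by case/andP; rewrite mulf_eq0 orbb => /eqP.
Qed.

Lemma sqnZ k v : sqn (k *: v) = k ^+ 2 * sqn v.
Proof. by rewrite /sqn dotvZl dotvZr mulrA expr2. Qed.

Lemma sqnB u v : sqn (u - v) = sqn u - 2 * dotv u v + sqn v.
Proof. rewrite /sqn dotvBl !dotvBr (dotvC v u); ring. Qed.

Lemma sqnN v : sqn (- v) = sqn v.
Proof. by rewrite /sqn dotvNl dotvNr opprK. Qed.

Lemma enorm_ge0 v : 0 <= enorm v.
Proof. exact: sqrtr_ge0. Qed.

Lemma enorm_sq v : enorm v * enorm v = sqn v.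
Proof. by rewrite /enorm -expr2 sqr_sqrtr // sqn_ge0. Qed.

Lemma enormZ k v : enorm (k *: v) = `|k| * enorm v.
Proof. by rewrite /enorm sqnZ sqrtrM ?sqr_ge0 // sqrtr_sqr. Qed.

Lemma enormN v : enorm (- v) = enorm v.
Proof. by rewrite /enorm sqnN. Qed.

Lemma CS u v : dotv u v <= enorm u * enorm v.
Proof.
set a := enorm u; set b := enorm v.
have h := sqn_ge0 (b *: u - a *: v).
rewrite sqnB !sqnZ dotvZl dotvZr -!enorm_sq -/a -/b in h.
have a0 : 0 <= a by exact: enorm_ge0.
have b0 : 0 <= b by exact: enorm_ge0.
have [ab0|ab0] := eqVneq (a * b) 0.
  move/eqP: ab0; rewrite mulf_eq0 => /orP[] /eqP H.
  - have u0 : u = 0 by apply: sqn_eq0; rewrite -enorm_sq -/a H mulr0.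
    by rewrite u0 /dotv big1 ?H ?mul0r // => j _; rewrite mxE mul0r.
  - have v0 : v = 0 by apply: sqn_eq0; rewrite -enorm_sq -/b H mulr0.
    by rewrite v0 /dotv big1 ?H ?mulr0 // => j _; rewrite mxE mulr0.
have ab : 0 < a * b by rewrite lt_def ab0 mulr_ge0.
have : 0 <= (a * b) * (2 * (a * b - dotv u v)) by
  (have -> : (a * b) * (2 * (a * b - dotv u v)) = b ^+ 2 * (a * a) - 2 * (b * (a * dotv u v)) + a ^+ 2 * (b * b) by ring); exact h.
rewrite pmulr_rge0 // pmulr_rge0 // subr_ge0 //.
Qed.

Lemma enormD u v : enorm (u + v) <= enorm u + enorm v.
Proof.
rewrite /enorm -(@ger0_norm _ (Num.sqrt (sqn u) + Num.sqrt (sqn v))) ?addr_ge0 ?sqrtr_ge0 //.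
rewrite -sqrtr_sqr ler_sqrt ?sqr_ge0 //.
have h := CS u v.
have e : sqn (u + v) = sqn u + 2 * dotv u v + sqn v.
  by rewrite /sqn dotvDl !dotvDr (dotvC v u); ring.
have := enorm_sq u; have := enorm_sq v; rewrite /enorm in h *.
rewrite e; move: (Num.sqrt (sqn u)) (Num.sqrt (sqn v)) h => a b h ha hb.
rewrite -ha -hb; nra.
Qed.

Lemma enorm_sum {n : nat} (z : 'I_n -> 'rV[R]_d) :
  enorm (\sum_(j < n) z j) <= \sum_(j < n) enorm (z j).
Proof.
elim/big_rec2: _ => [|j a b _ IH].
  by rewrite /enorm /sqn /dotv big1 ?sqrtr0 // => j _; rewrite mxE mul0r.
exact: le_trans (enormD _ _) (lerD (lexx _) IH).
Qed.

Lemma avg_bound (n : nat) (z : 'I_n -> 'rV[R]_d) (xs : 'rV[R]_d) (B : R) :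
  (0 < n)%N -> (forall j, sqn (z j - xs) <= B) ->
  sqn (n%:R^-1 *: \sum_(j < n) z j - xs) <= B.
Proof.
move=> n0 hz.
have B0 : 0 <= B by apply: le_trans (sqn_ge0 _) (hz (Ordinal n0)).
have nR : (n%:R : R) != 0 by rewrite pnatr_eq0 -lt0n.
have -> : n%:R^-1 *: \sum_(j < n) z j - xs = n%:R^-1 *: \sum_(j < n) (z j - xs).
  rewrite sumrB sumr_const card_ord scalerBr.

  by rewrite -[xs *+ n]scaler_nat scalerA mulVf // scale1r.
have he : forall j, enorm (z j - xs) <= Num.sqrt B.
  by move=> j; rewrite /enorm ler_sqrt.
have : enorm (n%:R^-1 *: \sum_(j < n) (z j - xs)) <= Num.sqrt B.
  rewrite enormZ ger0_norm ?invr_ge0 ?ler0n //.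
  rewrite ler_pdivrMl ?ltr0n //.
  apply: (le_trans (enorm_sum (fun j : 'I_n => z j - xs))).
  apply: (le_trans (ler_sum _ (fun j _ => he j))).
  by rewrite sumr_const card_ord mulr_natl.
move=> h; rewrite -enorm_sq -(sqr_sqrtr B0) expr2.
by apply: ler_pM => //; apply: enorm_ge0.
Qed.

Lemma step_contract (h : 'rV[R]_d -> R) (G : 'rV[R]_d -> 'rV[R]_d)
  (l c gb L mu : R) (xs x : 'rV[R]_d) :
  (forall y, l <= h y) -> h xs <= l ->
  (forall x y, h x + dotv (G x) (y - x) + mu / 2 * sqn (y - x) <= h y) ->
  (forall x v, h (x + v) <= h x + dotv (G x) v + L / 2 * sqn v) ->
  0 < L -> 1 <= c -> 0 < gb -> 0 <= mu ->
  sqn (x - sps_step c gb (h x) l (G x) *: G x - xs)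
    <= (1 - mu * Num.min (1 / (2 * c * L)) gb) * sqn (x - xs).
Proof.
move=> hl hs hconv hdesc L0 c1 gb0 mu0.
set g := G x; set gam := sps_step _ _ _ _ _; set al := Num.min _ _.
have c0 : 0 < c by lra.
have hx0 : 0 <= h x - l by rewrite subr_ge0.
have [gam_al gam_g] : al <= gam /\ gam * sqn g <= (h x - l) / c.
  rewrite /gam /sps_step; case: eqP => [g0|g0].
    split; first by rewrite /al ge_min lexx orbT.
    by rewrite -/g g0 /sqn /dotv big1 ?mulr0 ?divr_ge0 // ?ltW // => j _; rewrite mxE mul0r.
  have sg0 : 0 < sqn g.
    rewrite lt_def sqn_ge0 andbT; apply/eqP => H0; exact: g0 (sqn_eq0 _ H0).
  have desc : sqn g <= 2 * L * (h x - l).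
    have := hdesc x (- (L^-1 *: g)).
    rewrite dotvNr dotvZr sqnN sqnZ -/(sqn g).
    move/(le_trans (hl _)).
    have -> : h x + - (L^-1 * sqn g) + L / 2 * (L^-1 ^+ 2 * sqn g)
      = h x - sqn g / (2 * L) by field; lra.
    move=> H; have : sqn g / (2 * L) <= h x - l by lra.
    rewrite ler_pdivrMr; last by lra.
    by rewrite mulrC.
  split.
    rewrite /al le_min; apply/andP; split; last by rewrite ge_min lexx orbT.
    rewrite ge_min; apply/orP; left.
    rewrite ler_pdivlMr ?mulr_gt0 //.
    have -> : 1 / (2 * c * L) * (c * sqn g) = sqn g / (2 * L) by field; lra.
    rewrite ler_pdivrMr; last by lra.
    by rewrite mulrC.
  have q0 : 0 <= (h x - l) / (c * sqn g) by rewrite divr_ge0 // mulr_ge0 // ltW.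
  have mq : Num.min ((h x - l) / (c * sqn g)) gb <= (h x - l) / (c * sqn g).
    by rewrite ge_min lexx.
  apply: le_trans (ler_wpM2r (sqn_ge0 _) mq) _.
  have -> : (h x - l) / (c * sqn g) * sqn g = (h x - l) / c.
    by field; apply/andP; split; [rewrite gt_eqF|rewrite gt_eqF].
  by [].
have al0 : 0 <= al by rewrite /al le_min ?divr_ge0 ?ltW ?mulr_gt0 //; lra.
have gam0 : 0 <= gam by exact: le_trans gam_al.
have conv := hconv x xs.
have e1 : dotv g (xs - x) = - dotv (x - xs) g.
  by rewrite dotvC -dotvNl opprB.
have e2 : sqn (xs - x) = sqn (x - xs) by rewrite -sqnN opprB.
rewrite -/g e1 e2 in conv.
have E : x - gam *: g - xs = (x - xs) - gam *: g by rewrite addrAC.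
rewrite E [sqn (x - xs - _)]sqnB sqnZ dotvZr.
have D0 := sqn_ge0 (x - xs).
move: (sqn (x - xs)) (dotv (x - xs) g) (sqn g) D0 conv gam_g => D p s D0 conv gam_g.
have hgs : gam ^+ 2 * s <= gam * ((h x - l) / c).
  by rewrite expr2 -mulrA ler_wpM2l.
have hc : (h x - l) / c <= h x - l by rewrite ler_pdivrMr // ler_peMr.
have : mu * al * D <= mu * gam * D by rewrite ler_wpM2r // ler_wpM2l.
have : gam * ((h x - l) / c) <= gam * (h x - l) by rewrite ler_wpM2l.
nra.
Qed.
End LinAlg.
Arguments CS {R d}. Arguments enorm_sq {R d}. Arguments enorm_ge0 {R d}. Arguments enormN {R d}. Arguments enormZ {R d}. Arguments dotvBl {R d}. Arguments sqn_ge0 {R d}.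
Section An.
Variables (R : realType) (d : nat).

Lemma dgrad (h : 'rV[R]_d -> R) p v : 'd h p v = dotv (grad h p) v.
Proof.
rewrite {1}(row_sum_delta v) linear_sum /dotv.
apply: eq_bigr => j _; rewrite linearZ /= mxE mulrC.
by [].
Qed.

Lemma phi_derive (h : 'rV[R]_d -> R) (x v : 'rV[R]_d) (t : R) :
  (forall p, differentiable h p) ->
  is_derive t (1 : R) (fun s : R => h (x + s *: v)) (dotv (grad h (x + t *: v)) v).
Proof.
move=> hd.
have dg : is_diff t (fun s : R => x + s *: v) (fun s : R => s *: v).
  have := is_diffD (@is_diff_cst R R _ x t) (is_diff_scalel t v).
  by rewrite add0r.
have dh := differentiableP (hd (x + t *: v)).
have dc := is_diff_comp dg dh.
apply: DeriveDef.
  apply: diff_derivable; exact: ex_diff.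
rewrite deriveE; last exact: ex_diff.
by rewrite diff_val /= scale1r dgrad.
Qed.

Lemma descent (h : 'rV[R]_d -> R) (L : R) :
  (forall p, differentiable h p) ->
  (forall x y, enorm (grad h y - grad h x) <= L * enorm (x - y)) ->
  forall x v, h (x + v) <= h x + dotv (grad h x) v + L / 2 * sqn v.
Proof.
move=> hd hL x v.
set a := dotv (grad h x) v.
set q : {poly R} := a *: 'X + (L / 2 * sqn v) *: 'X^2.
pose psi := (fun s : R => h (x + s *: v)) - horner q.
have qd : forall t : R, is_derive t (1 : R) (horner q) (a + L * sqn v * t).
  move=> t; apply: is_derive_eq (is_derive_poly q t) _.
  change ((deriv q).[t] = a + L * sqn v * t). rewrite /q derivD !derivZ derivX derivXn hornerD !hornerZ hornerC hornerMn hornerX.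
  rewrite mulr1 mulr2n.
  move: (sqn v) => s.
  rewrite -[L / 2 * s * (t + t)]/((L / 2 * s) * (t + t)) mulrDr -mulrDl.
  by rewrite -mulrDl -splitr.
have dpsi : forall t : R, is_derive t (1 : R) psi
    (dotv (grad h (x + t *: v)) v - (a + L * sqn v * t)).
  move=> t; have H1 := phi_derive h x v t hd; have H2 := qd t; exact: is_deriveB H1 H2.
have cpsi : {within `[0, 1], continuous psi}.
  apply: continuous_subspaceT => t.
  apply: differentiable_continuous; apply/derivable1_diffP.
  have H := dpsi t. exact: (@ex_derive _ _ _ _ _ _ _ H).
have [c c01 hc] := MVT ltr01 (fun t _ => dpsi t) cpsi.
have c0 : 0 <= c by move: c01; rewrite in_itv /= => /andP[/ltW].
have key : dotv (grad h (x + c *: v)) v - (a + L * sqn v * c) <= 0.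
  rewrite /a.
  have H2 := CS (grad h (x + c *: v) - grad h x) v.
  rewrite dotvBl in H2.
  have E : x - (x + c *: v) = - (c *: v) by rewrite opprD addrA subrr sub0r.
  have H1 := hL x (x + c *: v).
  rewrite E enormN enormZ (ger0_norm c0) in H1.
  have H3 := ler_wpM2r (enorm_ge0 v) H1.
  have H4 : L * (c * enorm v) * enorm v = L * sqn v * c.
    by rewrite -enorm_sq; ring.
  rewrite H4 in H3.
  have H5 := le_trans H2 H3.
  by rewrite opprD addrA subr_le0.
have : psi 1 - psi 0 <= 0 by rewrite hc subr0 mulr1.
have q1 : q.[1] = a + L / 2 * sqn v.
  by rewrite /q hornerD !hornerZ hornerX hornerXn expr1n !mulr1.
have q0 : q.[0] = 0.
  by rewrite /q hornerD !hornerZ hornerX hornerXn expr0n !mulr0 addr0.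
move=> H.
have H' : (h (x + 1 *: v) - q.[1]) - (h (x + 0 *: v) - q.[0]) <= 0 := H.
rewrite scale1r scale0r addr0 q1 q0 subr0 subr_le0 lerBlDr in H'.
by rewrite -addrA.
Qed.
End An.

Section Meas.
Context {dO : measure_display} {Om : measurableType dO} {R : realType}.
Variable D : probability Om R.

Lemma mean_gap (f : Om -> R) (l : R) :
  measurable_fun setT f -> D.-integrable setT (fun w => (f w)%:E) ->
  {ae D, forall w, l <= f w} ->
  fine (\int[D]_w (f w)%:E) - l =
    fine (\int[D]_w `|(f w - l)%:E|%E)%E /\
  (\int[D]_w `|(f w - l)%:E|%E)%E \is a fin_num.
Proof.
move=> mf fint hl.
have mg : measurable_fun setT (fun w => (f w - l)%:E).
  by apply/measurable_EFinP; apply: measurable_funB => //; exact: measurable_cst.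
have e1 : (\int[D]_w (f w - l)%:E = \int[D]_w (f w)%:E - (l%:E))%E.
  rewrite (@integralB_EFin _ _ _ D setT f (cst l)) //; last first.
    exact: finite_measure_integrable_cst.
  rewrite (_ : (\int[D]_x (cst l x)%:E)%E = l%:E) //.
  transitivity (\int[D]_x (cst l%:E) x)%E; first by [].
  rewrite integral_cst //; transitivity (l%:E * 1)%E; last by rewrite mule1. congr (_ * _)%E; exact: probability_setT.
have e2 : (\int[D]_w (f w - l)%:E = \int[D]_w `|(f w - l)%:E|%E)%E.
  apply: ae_eq_integral => //.
    exact: measurableT_comp.
  apply: filterS hl => w hw _ /=.
  by rewrite ger0_norm // subr_ge0.
have fin : (\int[D]_w (f w)%:E)%E \is a fin_num by exact: integrable_fin_num.
rewrite -e2 e1; split; last by rewrite fin_numB fin.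
by rewrite (@fineB _ (\int[D]_w (f w)%:E)%E l%:E).
Qed.

Lemma mean_zero (f : Om -> R) (l : R) :
  measurable_fun setT f -> D.-integrable setT (fun w => (f w)%:E) ->
  {ae D, forall w, l <= f w} ->
  fine (\int[D]_w (f w)%:E)%E - l = 0 ->
  {ae D, forall w, f w <= l}.
Proof.
move=> mf fint hl h0.
have [e fin] := mean_gap f l mf fint hl.
have mg : measurable_fun setT (fun w => (f w - l)%:E).
  by apply/measurable_EFinP; apply: measurable_funB => //; exact: measurable_cst.
have i0 : (\int[D]_w `|(f w - l)%:E|%E = 0)%E.
  by rewrite -(fineK fin) -e h0.
have := (ae_eq_integral_abs D measurableT mg).1 i0.
apply: filterS => w /(_ I) /= /eqP.
by rewrite eqe subr_eq0 => /eqP ->.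
Qed.
End Meas.

Section Meas2.
Context {d : measure_display} {T : measurableType d} {R : realType}.
Variable P : probability T R.
Import HBNNSimple.

Lemma int_le_ae (f : T -> R) (K : R) :
  (forall w, 0 <= f w) -> 0 <= K -> {ae P, forall w, f w <= K} ->
  (\int[P]_w (f w)%:E <= K%:E)%E.
Proof.
move=> f0 K0 hK.
rewrite ge0_integralTE; last by move=> w; rewrite lee_fin.
apply: ge_ereal_sup => _ [h hf <-].
rewrite -[X in (X <= _)%E](_ : \int[P]_(x in setT) (h x)%:E = _)%E; last first.
  by rewrite integral_nnsfun // patch_setT.
have -> : (K%:E = \int[P]_(x in setT) (cst K%:E) x)%E.
  rewrite integral_cst //; transitivity (K%:E * 1)%E; first by rewrite mule1.
  congr (_ * _)%E; symmetry; exact: probability_setT.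
have h0 : forall x, setT x -> (0 <= (h x)%:E)%E by move=> x _; rewrite lee_fin.
have k0 : forall x : T, setT x -> (0 <= (cst K%:E) x)%E by move=> x Hx; rewrite /= lee_fin.
have mhh : measurable_fun setT (fun x => (h x)%:E) by apply: measurableT_comp => //; exact: measurable_funPT.
have mk : measurable_fun setT (cst K%:E : T -> \bar R) by exact: measurable_cst.
apply: (ae_ge0_le_integral measurableT h0 mhh k0 mk).
apply: filterS hK => w hw _ /=.
by rewrite lee_fin (le_trans _ hw) // -lee_fin hf.
Qed.

Lemma ae_exists (Q : T -> Prop) : {ae P, forall w, Q w} -> exists w, Q w.
Proof.
move=> [N [mN N0 sub]].
apply: contrapT => hno.
have : (P setT <= P N)%E.
  apply: le_measure; rewrite ?inE //.
  by move=> w _; apply: sub => /= Hq; apply: hno; exists w.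
by rewrite probability_setT N0 lee_fin ler10.
Qed.

Lemma ae_countable (Q : nat -> T -> Prop) :
  (forall k, {ae P, forall w, Q k w}) -> {ae P, forall w, forall k, Q k w}.
Proof.
move=> hQ.
apply: (@negligibleS _ _ _ P (\bigcup_k ~` [set w | Q k w])).
  move=> w /= hw; apply: contrapT => hn; apply: hw => k.
  by apply: contrapT => hk; apply: hn; exists k.
by apply: negligible_bigcup => k; exact: hQ.
Qed.
End Meas2.

Lemma ae_pull {d1 d2 : measure_display} {T : measurableType d1}
  {Om : measurableType d2} {R : realType}
  (P : probability T R) (D : probability Om R) (X : T -> Om) (Q : Om -> Prop) :
  measurable_fun setT X -> (forall A, measurable A -> P (X @^-1` A) = D A) ->
  {ae D, forall w, Q w} -> {ae P, forall w, Q (X w)}.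
Proof.
move=> mX hlaw [N [mN N0 sub]].
exists (X @^-1` N); split.
- by rewrite -[X @^-1` N]setTI; exact: mX.
- by rewrite hlaw.
- by move=> w /= hq; apply: sub.
Qed.


Lemma ae_fin {d : measure_display} {T : measurableType d} {R : realType}
  (P : probability T R) (n : nat) (Q : 'I_n -> T -> Prop) :
  (forall i, {ae P, forall w, Q i w}) -> {ae P, forall w, forall i, Q i w}.
Proof.
move=> hQ.
suff HH : forall k, {ae P, forall w, forall H : (k < n)%N, Q (Ordinal H) w}.
  apply: filterS (@ae_countable _ _ _ P (fun k w => forall H : (k < n)%N, Q (Ordinal H) w) HH) => w H i.
  have := H i (ltn_ord i).
  by have -> : Ordinal (ltn_ord i) = i by apply: val_inj.
move=> k; have [kn|kn] : (k < n)%N \/ ~~ (k < n)%N by case: (k < n)%N; [left|right].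
  by apply: filterS (hQ (Ordinal kn)) => w hw H; rewrite (bool_irrelevance H kn).
apply: filterS (@filterT _ _ _) => w _ H.
by exfalso; move: H; rewrite (negbTE kn).
Qed.

Theorem corollary1
  (R : realType) (n d tau : nat)
  (hn : (1 <= n)%N) (hd : (1 <= d)%N) (htau : (1 <= tau)%N)
  (dO : 'I_n -> measure_display) (Om : forall i : 'I_n, measurableType (dO i))
  (D : forall i : 'I_n, probability (Om i) R)
  (F : forall i : 'I_n, 'rV[R]_d -> Om i -> R) (lstar : 'I_n -> R)
  (* F_i(x, .) is a measurable, D_i-integrable function (so f_i is well defined) *)
  (HFmeas : forall i x, measurable_fun setT (F i x))
  (HFint : forall i x, (D i).-integrable setT (fun w => (F i x w)%:E))
  (* F_i(., xi) differentiable *)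
  (HFdiff : forall i w x, differentiable (fun z : 'rV[R]_d => F i z w) x)
  (* E grad F_i(x, xi) = grad f_i(x) *)
  (Hfdiff : forall i x, differentiable (floc R n d dO Om F D i) x)
  (Hgint : forall i x (j : 'I_d), (D i).-integrable setT
             (fun w => (grad (fun z : 'rV[R]_d => F i z w) x 0 j)%:E))
  (Hunbiased : forall i x (j : 'I_d),
     Rintegral (D i) setT (fun w => grad (fun z : 'rV[R]_d => F i z w) x 0 j)
     = grad (floc R n d dO Om F D i) x 0 j)
  (* l_i^* <= F_i^* = inf over xi in supp(D_i) and x of F_i(x, xi) *)
  (Hlstar : forall i, {ae D i, forall w, forall x, lstar i <= F i x w})
  (L mu : R)
  (* L-smoothness (for xi in the support of D_i) *)
  (HL : forall i, {ae D i, forall w, forall x y : 'rV[R]_d,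
     enorm (grad (fun z => F i z w) y - grad (fun z => F i z w) x)
       <= L * enorm (x - y)})
  (* mu-convexity *)
  (Hconv : forall i w (x y : 'rV[R]_d),
     F i x w + dotv (grad (fun z => F i z w) x) (y - x) + mu / 2 * sqn (y - x)
       <= F i y w)
  (hmu : 0 < mu)
  (* x* is the minimizer of f *)
  (xstar : 'rV[R]_d) (Hmin : forall x, fglob R n d dO Om F D xstar <= fglob R n d dO Om F D x)
  (* interpolation *)
  (Hinterp : sigma_f2 R n d dO Om F lstar D xstar = 0)
  (c gb : R) (hc : 4 * (tau%:R) ^+ 2 <= c) (hgb : 0 < gb)
  (x0 : 'rV[R]_d)
  (* the random samples xi_t^i ~ D_i, all mutually independent *)
  (dT : measure_display) (T : measurableType dT) (P : probability T R)
  (xi : nat -> forall i : 'I_n, T -> Om i)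
  (Hxim : forall t i, measurable_fun setT (xi t i))
  (Hlaw : forall t i (A : set (Om i)), measurable A -> P (xi t i @^-1` A) = D i A)
  (Hind : mutually_independent R n dO Om dT T P xi)
  (Tn : nat) (hT : (1 <= Tn)%N) :
  let alpha := Num.min (1 / (2 * c * L)) gb in
  (\int[P]_w (sqn (xbar R n d tau dO Om F lstar c gb x0 (fun t i => xi t i w) Tn
                    - xstar))%:E
   <= ((mu * alpha)^-1 * (1 - mu * alpha) ^+ Tn
        * sqn (x0 - xstar))%:E)%E.
Proof.
cbv zeta. set alpha := Num.min (1 / (2 * c * L)) gb.
have c1 : 1 <= c.
  have t1 : 1 <= (tau%:R : R) by rewrite ler1n.
  have : 1 <= (tau%:R : R) ^+ 2 by rewrite expr2; nra.
  lra.
pose good (i : 'I_n) (w : Om i) :=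
  [/\ (forall x, lstar i <= F i x w),
      (forall x y : 'rV[R]_d, enorm (grad (fun z => F i z w) y - grad (fun z => F i z w) x)
          <= L * enorm (x - y))
    & F i xstar w <= lstar i].
have Hl' : forall i, {ae D i, forall w, lstar i <= F i xstar w}.
  by move=> i; apply: filterS (Hlstar i) => w hw; exact: hw.
have hi : forall i, 0 <= floc R n d dO Om F D i xstar - lstar i.
  move=> i; have [e _] := mean_gap (D i) (F i xstar) (lstar i) (HFmeas i xstar) (HFint i xstar) (Hl' i).
  rewrite /floc /Rintegral e; apply: fine_ge0; exact: integral_ge0.
have hsum : \sum_(i < n) (floc R n d dO Om F D i xstar - lstar i) = 0.
  move: Hinterp; rewrite /sigma_f2 => /eqP; rewrite mulf_eq0 invr_eq0 pnatr_eq0.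
  have -> : (n == 0)%N = false by rewrite eqn0Ngt hn.
  by move=> /eqP.
have hz : forall i, floc R n d dO Om F D i xstar - lstar i = 0.
  by move=> i; exact: (psumr_eq0P (fun i _ => hi i) hsum).
have Hgood : forall i, {ae D i, forall w, good i w}.
  move=> i.
  have Hs : {ae D i, forall w, F i xstar w <= lstar i}.
    exact: mean_zero (D i) (F i xstar) (lstar i) (HFmeas i xstar) (HFint i xstar) (Hl' i) (hz i).
  by apply: filterS (filterI (Hlstar i) (filterI (HL i) Hs)) => w [h1 [h2 h3]]; split.
have Hall : {ae P, forall w, forall t i, good i (xi t i w)}.
  apply: ae_countable => t; apply: ae_fin => i.
  exact: ae_pull (Hxim t i) (Hlaw t i) (Hgood i).
pose i0 : 'I_n := Ordinal hn.
have [w0 [g01 g02 g03]] := ae_exists (D i0) _ (Hgood i0).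
have muL : mu <= L.
  pose v : 'rV[R]_d := delta_mx 0 (Ordinal hd).
  have sv : 0 < sqn v.
    rewrite lt_def sqn_ge0 andbT; apply/eqP => /sqn_eq0 /rowP /(_ (Ordinal hd)).
    by rewrite !mxE !eqxx /= => /eqP; rewrite oner_eq0.
  have hdesc := @descent R d (fun z => F i0 z w0) L (HFdiff i0 w0) g02 0 v.
  have hcv := Hconv i0 w0 0 v.
  rewrite subr0 in hcv; rewrite add0r in hdesc.
  have : mu / 2 * sqn v <= L / 2 * sqn v by lra.
  by rewrite ler_pM2r // ler_pM2r // invr_gt0 ltr0n.
have L0 : 0 < L by lra.
have al0 : 0 < alpha.
  by rewrite /alpha lt_min divr_gt0 ?mulr_gt0 ?ltr0n //; lra.
have mual1 : mu * alpha <= 1.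
  have Hal : alpha <= 1 / (2 * c * L) by rewrite /alpha ge_min lexx.
  have h1 : mu * alpha <= L * alpha := ler_wpM2r (ltW al0) muL.
  have h2 : L * alpha <= L * (1 / (2 * c * L)) := ler_wpM2l (ltW L0) Hal.
  have h3 : L * (1 / (2 * c * L)) = 1 / (2 * c).
    by field; apply/andP; split; rewrite gt_eqF //; lra.
  have h4 : 1 / (2 * c) <= 1 by rewrite ler_pdivrMr; lra.
  lra.
have q0 : 0 <= 1 - mu * alpha by lra.
have Hdet : forall w, (forall t i, good i (xi t i w)) -> forall t i,
    sqn (fedsps R n d tau dO Om F lstar c gb x0 (fun t i => xi t i w) t i - xstar)
      <= (1 - mu * alpha) ^+ t * sqn (x0 - xstar).
  move=> w Hw; elim=> [|t IH] i; first by rewrite /= expr0 mul1r.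
  have Hy : forall j,
      sqn (fedsps R n d tau dO Om F lstar c gb x0 (fun t i => xi t i w) t j
        - sps_step c gb (F j (fedsps R n d tau dO Om F lstar c gb x0 (fun t i => xi t i w) t j) (xi t j w))
            (lstar j) (grad (fun z => F j z (xi t j w))
               (fedsps R n d tau dO Om F lstar c gb x0 (fun t i => xi t i w) t j))
          *: grad (fun z => F j z (xi t j w))
               (fedsps R n d tau dO Om F lstar c gb x0 (fun t i => xi t i w) t j)
        - xstar) <= (1 - mu * alpha) ^+ t.+1 * sqn (x0 - xstar).
    move=> j; have [g1 g2 g3] := Hw t j.
    have hdesc := @descent R d (fun z => F j z (xi t j w)) L (HFdiff j _) g2.
    have := @step_contract R d (fun z => F j z (xi t j w))
      (grad (fun z => F j z (xi t j w))) (lstar j) c gb L mu xstar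
      (fedsps R n d tau dO Om F lstar c gb x0 (fun t i => xi t i w) t j)
      g1 g3 (Hconv j (xi t j w)) hdesc L0 c1 hgb (ltW hmu).
    move/le_trans; apply.
    rewrite -/alpha exprS -[_ * _ * sqn (x0 - xstar)]mulrA; apply: ler_wpM2l => //; exact: IH.
  rewrite /= /fed_step /=; case: ifP => _ /=.
    by apply: avg_bound => //.
  exact: Hy.
have D00 := sqn_ge0 (x0 - xstar).
have pw0 : 0 <= (1 - mu * alpha) ^+ Tn by rewrite exprn_ge0.
have inv1 : 1 <= (mu * alpha)^-1.
  by rewrite invf_ge1 // mulr_gt0.
apply: int_le_ae.
- by move=> w; exact: sqn_ge0.
- by rewrite mulr_ge0 // mulr_ge0 // invr_ge0 ltW // mulr_gt0.
apply: filterS Hall => w Hw.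
rewrite /xbar.
apply: le_trans (@avg_bound R d n _ xstar _ hn (fun j => Hdet w Hw Tn j)) _.
by rewrite -mulrA ler_peMl // mulr_ge0.
Qed.
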